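(* Let $q>0$ and $c=\sqrt q$. The solution of the Volterra lattice $u'_j=u_j(u_{j+1}-u_{j-1})$, $j\in\mathbb Z$, with initial data at $t=0$ given by $u_j=0$ for $j\le0$, $u_1=u_3=u_5=\dots=1$, $u_2=u_4=\dots=q$, has first component $u_1=f'_1/f_1$ with $$f_1=1+\int_0^t{}_1F_1\bigl(\tfrac32,3,4cx\bigr)e^{(c-1)^2x}\,dx.$$
   Context: $f'=df/dt$. ${}_1F_1(a,b,z)=\sum_{n\ge0}\frac{(a)_n}{(b)_n}\frac{z^n}{n!}$ with $(a)_n=a(a+1)\cdots(a+n-1)$, $(a)_0=1$. *)

(* Defs.v *)
From Stdlib Require Import Reals ZArith.
From Coquelicot Require Import Coquelicot.
Open Scope R_scope.

Fixpoint pochhammer (a : R) (n : nat) : R :=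
  match n with
  | O => 1
  | S m => pochhammer a m * (a + INR m)
  end.

Definition hyp1F1 (a b z : R) : R :=
  Series (fun n => pochhammer a n / pochhammer b n * z ^ n / INR (fact n)).

Definition f1 (q t : R) : R :=
  let c := sqrt q in
  1 + RInt (fun x => hyp1F1 (3/2) 3 (4 * c * x) * exp ((c - 1) ^ 2 * x)) 0 t.

(* Main.v *)
Require Import Defs.
From Stdlib Require Import Reals ZArith.
From Coquelicot Require Import Coquelicot.
From Stdlib Require Import Lra Lia Arith Factorial.
Open Scope R_scope.

Lemma rc_eps (F : R -> R) (l : R) :
  filterlim F (at_right 0) (locally l) ->
  forall eps, 0 < eps -> exists d, 0 < d /\ forall x, 0 < x < d -> Rabs (F x - l) < eps.
Proof.
  intros H eps Heps.
  destruct (H (ball l (mkposreal eps Heps)) (locally_ball _ _)) as [d Hd].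
  exists d. split. apply cond_pos.
  intros x Hx. specialize (Hd x). 
  assert (B : ball 0 d x).
  { unfold ball; simpl; unfold AbsRing_ball, minus, plus, opp, abs; simpl.
    rewrite Ropp_0, Rplus_0_r, Rabs_pos_eq; lra. }
  specialize (Hd B (proj1 Hx)). unfold ball in Hd; simpl in Hd.
  unfold AbsRing_ball, minus, plus, opp, abs in Hd; simpl in Hd. exact Hd.
Qed.

Lemma mono0 (F F' : R -> R) (T : R) :
  (forall s, 0 < s <= T -> is_derive F s (F' s)) ->
  (forall s, 0 < s <= T -> 0 <= F' s) ->
  filterlim F (at_right 0) (locally (F 0)) ->
  forall t, 0 < t <= T -> F 0 <= F t.
Proof.
  intros HD HP HC.
  assert (Hm : forall s t, 0 < s < t -> t <= T -> F s <= F t).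
  { intros s t Hs Ht.
    destruct (MVT_gen F s t F') as [c [Hc Heq]].
    - intros x Hx. rewrite Rmin_left in Hx by lra. rewrite Rmax_right in Hx by lra.
      apply HD; lra.
    - intros x Hx. rewrite Rmin_left in Hx by lra. rewrite Rmax_right in Hx by lra.
      apply continuity_pt_filterlim. apply (ex_derive_continuous F).
      exists (F' x). apply HD; lra.
    - rewrite Rmin_left in Hc by lra. rewrite Rmax_right in Hc by lra.
      assert (0 <= F' c) by (apply HP; lra).
      assert (0 <= F' c * (t - s)) by (apply Rmult_le_pos; lra). lra. }
  intros t Ht.
  destruct (Rle_or_lt (F 0) (F t)) as [h|h]; [exact h|].
  destruct (rc_eps F (F 0) HC (F 0 - F t)) as [d [Hd Hd']]; [lra|].
  set (s := Rmin (d/2) (t/2)).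
  assert (Hs1 : 0 < s) by (unfold s; apply Rmin_glb_lt; lra).
  assert (Hs2 : s < d) by (unfold s; apply (Rle_lt_trans _ (d/2)); [apply Rmin_l|lra]).
  assert (Hs3 : s < t) by (unfold s; apply (Rle_lt_trans _ (t/2)); [apply Rmin_r|lra]).
  specialize (Hd' s (conj Hs1 Hs2)).
  specialize (Hm s t (conj Hs1 Hs3) (proj2 Ht)).
  apply Rabs_def2 in Hd'. lra.
Qed.

Lemma rc_plus (f g : R -> R) a b :
  filterlim f (at_right 0) (locally a) -> filterlim g (at_right 0) (locally b) ->
  filterlim (fun x => f x + g x) (at_right 0) (locally (a + b)).
Proof.
  intros Hf Hg. exact (filterlim_comp_2 f g Rplus Hf Hg (@filterlim_plus _ R_NormedModule a b)).
Qed.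

Lemma rc_mult (f g : R -> R) a b :
  filterlim f (at_right 0) (locally a) -> filterlim g (at_right 0) (locally b) ->
  filterlim (fun x => f x * g x) (at_right 0) (locally (a * b)).
Proof.
  intros Hf Hg. exact (filterlim_comp_2 f g Rmult Hf Hg (@filterlim_mult R_AbsRing a b)).
Qed.

Lemma rc_const (a : R) : filterlim (fun _ => a) (at_right 0) (locally a).
Proof. apply filterlim_const. Qed.

Lemma rc_cont (f : R -> R) : continuous f 0 -> filterlim f (at_right 0) (locally (f 0)).
Proof.
  intros H. eapply filterlim_comp. 2: exact H.
  intros P [d Hd]. exists d. intros y Hy _. apply Hd, Hy.
Qed.

Lemma rc_ext (f g : R -> R) a :
  (forall x, 0 < x -> f x = g x) -> filterlim f (at_right 0) (locally a) ->
  filterlim g (at_right 0) (locally a).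
Proof.
  intros He Hf P HP. specialize (Hf P HP). destruct Hf as [d Hd].
  exists d. intros y Hy Hy'. unfold filtermap. rewrite <- He by exact Hy'. apply Hd; auto.
Qed.

Lemma pow_fact_zero (C x y : R) : 0 <= C ->
  (forall n, Rabs y <= C * (x ^ n / INR (fact n))) -> y = 0.
Proof.
  intros HC H.
  destruct (Req_dec y 0) as [e|ne]; [exact e|exfalso].
  assert (Hy : 0 < Rabs y) by (apply Rabs_pos_lt; exact ne).
  destruct (cv_speed_pow_fact x (Rabs y / (C + 1))) as [N HN].
  { apply Rdiv_lt_0_compat; lra. }
  specialize (HN N (Nat.le_refl N)). unfold Rdist in HN. rewrite Rminus_0_r in HN.
  specialize (H N).
  assert (C * (x ^ N / INR (fact N)) <= C * Rabs (x ^ N / INR (fact N))).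
  { apply Rmult_le_compat_l; [lra|apply Rle_abs]. }
  assert (C * Rabs (x ^ N / INR (fact N)) <= C * (Rabs y / (C + 1))).
  { apply Rmult_le_compat_l; lra. }
  assert (C * (Rabs y / (C + 1)) < Rabs y).
  { apply (Rmult_lt_reg_r (C+1)); [lra|]. field_simplify; lra. }
  lra.
Qed.

Lemma Rabs_le_inv' x y : Rabs x <= y -> - y <= x <= y.
Proof. unfold Rabs; destruct (Rcase_abs x); lra. Qed.

Lemma GL (g g' : nat -> R -> R) (T A rho K : R) :
  0 <= A -> 0 < rho -> 0 <= K ->
  (forall k, g k 0 = 0) ->
  (forall k, filterlim (g k) (at_right 0) (locally 0)) ->
  (forall k s, 0 < s -> is_derive (g k) s (g' k s)) ->
  (forall k s, 0 <= s <= T -> Rabs (g k s) <= A * rho ^ k) ->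
  (forall s E, 0 < s <= T -> 0 <= E -> (forall j, Rabs (g j s) <= E * rho ^ j) ->
     forall k, Rabs (g' k s) <= K * E * rho ^ k) ->
  forall k s, 0 <= s <= T -> g k s = 0.
Proof.
  intros HA Hr HK H0 HC HD HB HDB.
  assert (Hfp : forall n, 0 < INR (fact n)) by (intro n; apply lt_0_INR, lt_O_fact).
  assert (Claim : forall n k s, 0 <= s <= T ->
            Rabs (g k s) <= A * rho ^ k * ((K * s) ^ n / INR (fact n))).
  { induction n as [|n IH].
    - intros k s Hs. simpl. rewrite Rdiv_1_r, Rmult_1_r. apply HB, Hs.
    - intros k t Ht.
      assert (Hrk : 0 < rho ^ k) by (apply pow_lt, Hr).
      destruct (Req_dec t 0) as [e|ne].
      { subst t. rewrite H0, Rabs_R0. apply Rmult_le_pos.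
        apply Rmult_le_pos; lra. apply Rmult_le_pos.
        apply pow_le; lra. left; apply Rinv_0_lt_compat, Hfp. }
      set (h := fun s => A * rho ^ k * ((K * s) ^ S n / INR (fact (S n)))).
      set (h' := fun s => K * (A * ((K * s) ^ n / INR (fact n))) * rho ^ k).
      assert (Hh : forall s, is_derive h s (h' s)).
      { intro s. unfold h, h'. auto_derive; [exact I|].
        change (match n with 0%nat => 1 | S _ => INR n + 1 end) with (INR (S n)).
        change (fact n + n * fact n)%nat with (fact (S n)).
        rewrite fact_simpl, mult_INR.
        assert (0 < INR (fact n)) by apply Hfp.
        assert (0 < INR (S n)) by (apply lt_0_INR; lia).
        field. lra. }
      assert (Hhc : filterlim h (at_right 0) (locally (h 0))).
      { apply rc_cont. apply (ex_derive_continuous h). exists (h' 0). apply Hh. }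
      assert (Hh0 : h 0 = 0).
      { unfold h. rewrite Rmult_0_r, pow_i by lia. unfold Rdiv. ring. }
      assert (Hder : forall s, 0 < s <= t -> Rabs (g' k s) <= h' s).
      { intros s Hs. unfold h'. apply HDB; [lra| |].
        - apply Rmult_le_pos; [lra|]. apply Rmult_le_pos.
          apply pow_le; apply Rmult_le_pos; lra. left; apply Rinv_0_lt_compat, Hfp.
        - intro j. eapply Rle_trans. apply (IH j s). lra. right; ring. }
      assert (HgC := HC k).
      assert (E1 : 0 <= h t - g k t).
      { assert (M := mono0 (fun s => h s - g k s) (fun s => h' s - g' k s) t).
        simpl in M. rewrite Hh0, H0 in M. replace (0 - 0) with 0 in M by ring.
        apply M; [| | |lra].
        - intros s Hs. apply (is_derive_minus h (g k)); [apply Hh|apply HD; lra].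
        - intros s Hs. specialize (Hder s Hs). apply Rabs_le_inv' in Hder. lra.
        - assert (L := rc_plus _ _ _ _ Hhc (rc_mult _ _ _ _ (rc_const (-1)) HgC)).
          rewrite Hh0 in L. replace (0 + -1 * 0) with 0 in L by ring.
          apply (rc_ext (fun x => h x + (-1) * g k x)); [intros; ring|exact L]. }
      assert (E2 : 0 <= h t + g k t).
      { assert (M := mono0 (fun s => h s + g k s) (fun s => h' s + g' k s) t).
        simpl in M. rewrite Hh0, H0 in M. replace (0 + 0) with 0 in M by ring.
        apply M; [| | |lra].
        - intros s Hs. apply (is_derive_plus h (g k)); [apply Hh|apply HD; lra].
        - intros s Hs. specialize (Hder s Hs). apply Rabs_le_inv' in Hder. lra.
        - assert (L := rc_plus _ _ _ _ Hhc HgC).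
          rewrite Hh0 in L. replace (0 + 0) with 0 in L by ring. exact L. }
      unfold h in E1, E2. apply Rabs_le. lra. }
  intros k s Hs.
  apply (pow_fact_zero (A * rho ^ k) (K * s)).
  - apply Rmult_le_pos; [lra|apply pow_le; lra].
  - intro n. apply Claim, Hs.
Qed.

Lemma isd_plus (f g : R -> R) x df dg :
  is_derive f x df -> is_derive g x dg -> is_derive (fun t => f t + g t) x (df + dg).
Proof. intros; apply (is_derive_plus f g x df dg); auto. Qed.

Lemma isd_mult (f g : R -> R) x df dg :
  is_derive f x df -> is_derive g x dg -> is_derive (fun t => f t * g t) x (df * g x + f x * dg).
Proof. intros; apply (is_derive_mult f g x df dg); auto. intros; apply Rmult_comm. Qed.

Lemma isd_const (a x : R) : is_derive (fun _ => a) x 0.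
Proof. apply (is_derive_const a x). Qed.

Lemma isd_eq (f : R -> R) (x l l' : R) : l = l' -> is_derive f x l -> is_derive f x l'.
Proof. intros ->; auto. Qed.

Fixpoint Yv (w : nat -> R) (n h : nat) : R :=
  match n with
  | O => if Nat.eqb h 0 then 1 else 0
  | S n' => match h with
            | O => Yv w n' 1
            | S h' => Yv w n' (S (S h')) + w (S h') * Yv w n' h'
            end
  end.

Lemma Yv_ext w w' : (forall h, w h = w' h) -> forall n h, Yv w n h = Yv w' n h.
Proof.
  intros E n; induction n as [|n IH]; intro h; [reflexivity|].
  destruct h; simpl; rewrite ?IH, ?E; reflexivity.
Qed.

Lemma Yv_bound w M : 0 <= M -> (forall h, Rabs (w h) <= M) ->
  forall n h, Rabs (Yv w n h) <= (1 + M) ^ n.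
Proof.
  intros HM Hw n; induction n as [|n IH]; intro h.
  - simpl. destruct (Nat.eqb h 0); rewrite ?Rabs_R1, ?Rabs_R0; lra.
  - assert (0 <= (1 + M) ^ n) by (apply pow_le; lra).
    destruct h; simpl.
    + specialize (IH 1%nat). nra.
    + eapply Rle_trans. apply Rabs_triang. rewrite Rabs_mult.
      assert (I1 := IH (S (S h))). specialize (Hw (S h)). assert (I2 := IH h).
      assert (Rabs (w (S h)) * Rabs (Yv w n h) <= M * (1 + M) ^ n).
      { apply Rmult_le_compat; auto using Rabs_pos. }
      nra.
Qed.

Lemma Yv_pos w : (forall h, 0 <= w h) -> forall n h, 0 <= Yv w n h.
Proof.
  intros Hw n; induction n as [|n IH]; intro h.
  - simpl. destruct (Nat.eqb h 0); lra.
  - destruct h; simpl; auto.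
    assert (I1 := IH (S (S h))). specialize (Hw (S h)). assert (I2 := IH h). nra.
Qed.

Lemma Yv_rc (w : nat -> R -> R) :
  (forall h, filterlim (w h) (at_right 0) (locally (w h 0))) ->
  forall n h, filterlim (fun t => Yv (fun j => w j t) n h) (at_right 0)
                 (locally (Yv (fun j => w j 0) n h)).
Proof.
  intros Hw n; induction n as [|n IH]; intro h.
  - simpl. apply rc_const.
  - destruct h; simpl. apply IH.
    apply rc_plus; [apply IH|]. apply rc_mult; [apply Hw|apply IH].
Qed.

Section Lat.
Variable w : nat -> R -> R.
Hypothesis Hw0 : forall t, 0 < t -> w O t = 0.
Hypothesis Hwd : forall h t, 0 < t ->
  is_derive (w (S h)) t (w (S h) t * (w (S (S h)) t - w h t)).

Definition Yt n h t := Yv (fun j => w j t) n h.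

Lemma Y_deriv : forall n h t, 0 < t ->
  is_derive (Yt n h) t
   ((w h t + w (S h) t) * Yt n h t + Yt n (S (S h)) t - w 1%nat t * Yt n h t).
Proof.
  unfold Yt. intro n; induction n as [|n IH]; intros h t Ht.
  - destruct h; simpl.
    + eapply isd_eq; [|apply isd_const]. rewrite Hw0 by exact Ht. ring.
    + eapply isd_eq; [|apply isd_const]. ring.
  - destruct h; simpl.
    + eapply isd_eq; [|apply IH; exact Ht]. rewrite Hw0 by exact Ht. ring.
    + eapply isd_eq; [|apply isd_plus; [apply IH; exact Ht|apply isd_mult;
          [apply Hwd; exact Ht|apply IH; exact Ht]]].
      simpl. ring.
Qed.

Definition cm k t := Yt (2 * k) 0 t.

Lemma cm_S k t : cm (S k) t = Yt (2 * k) 2 t + w 1%nat t * cm k t.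
Proof.
  unfold cm, Yt. replace (2 * S k)%nat with (S (S (2 * k))) by lia. simpl. reflexivity.
Qed.

Lemma cm_deriv k t : 0 < t -> is_derive (cm k) t (cm (S k) t - w 1%nat t * cm k t).
Proof.
  intro Ht. unfold cm at 1. eapply isd_eq; [|apply Y_deriv; exact Ht].
  rewrite cm_S. unfold cm. rewrite Hw0 by exact Ht. ring.
Qed.

Lemma cm_0 t : cm 0 t = 1.
Proof. reflexivity. Qed.

Lemma cm_1 t : cm 1 t = w 1%nat t.
Proof. unfold cm, Yt. simpl. ring. Qed.

End Lat.

Fixpoint bn (n k : nat) : R :=
  match n, k with
  | O, O => 1
  | O, S _ => 0
  | S _, O => 1
  | S n', S k' => bn n' k' + bn n' (S k')
  end.

Lemma bn_n0 n : bn n 0 = 1.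
Proof. destruct n; reflexivity. Qed.

Lemma bn_zero n : forall k, (n < k)%nat -> bn n k = 0.
Proof.
  induction n as [|n IH]; intros k Hk.
  - destruct k; [lia|reflexivity].
  - destruct k; [lia|]. simpl. rewrite !IH by lia. ring.
Qed.

Lemma INR_fact_pos n : 0 < INR (fact n).
Proof. apply lt_0_INR, lt_O_fact. Qed.

Lemma bn_fact n : forall k, (k <= n)%nat ->
  bn n k = INR (fact n) / (INR (fact k) * INR (fact (n - k))).
Proof.
  induction n as [|n IH]; intros k Hk.
  - destruct k; [|lia]. simpl. field.
  - destruct k.
    + simpl bn. rewrite Nat.sub_0_r. simpl (fact 0). rewrite Rmult_1_l.
      field. apply Rgt_not_eq, INR_fact_pos.
    + simpl bn. destruct (Nat.eq_dec k n) as [->|ne].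
      * rewrite (bn_zero n (S n)) by lia. rewrite IH by lia. rewrite !Nat.sub_diag. simpl (fact 0).
        assert (A1 := INR_fact_pos n). assert (A2 := INR_fact_pos (S n)).
        simpl (INR 1). field. lra.
      * rewrite !IH by lia.
        set (m := (n - S k)%nat).
        assert (E1 : (n - k = S m)%nat) by (unfold m; lia).
        assert (E2 : (S n - S k = S m)%nat) by (unfold m; lia).
        assert (E3 : (n - S k = m)%nat) by (unfold m; lia).
        rewrite ?E1, ?E2, ?E3.
        assert (En : INR n = INR k + INR m + 1).
        { rewrite <- plus_INR, <- S_INR. f_equal. unfold m. lia. }
        rewrite !fact_simpl, !mult_INR.
        assert (A1 := INR_fact_pos n). assert (A2 := INR_fact_pos k).
        assert (A3 := INR_fact_pos m).
        rewrite !S_INR. rewrite En.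
        assert (0 <= INR k) by apply pos_INR. assert (0 <= INR m) by apply pos_INR.
        field. repeat split; lra.
Qed.

Definition cb (n : nat) (m : Z) : R :=
  if (m <? 0)%Z then 0 else bn n (Z.to_nat m).

Lemma cb_pascal n m : cb (S n) m = cb n m + cb n (m - 1).
Proof.
  unfold cb. destruct (Z.ltb_spec m 0).
  - destruct (Z.ltb_spec (m - 1) 0); [ring|lia].
  - destruct (Z.ltb_spec (m - 1) 0).
    + assert (m = 0%Z) by lia. subst. simpl. rewrite bn_n0. ring.
    + replace (Z.to_nat m) with (S (Z.to_nat (m - 1))) by lia. simpl. ring.
Qed.

Lemma cb_arg n a b : a = b -> cb n a = cb n b.
Proof. intros ->; reflexivity. Qed.

Definition Wc (i : nat) (j : Z) : R :=
  cb (2 * i + 1) (Z.of_nat i - j) - cb (2 * i + 1) (Z.of_nat i - j - 1).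

Lemma Wc_rec i j : Wc (S i) j = Wc i (j + 1) + 2 * Wc i j + Wc i (j - 1).
Proof.
  unfold Wc. replace (2 * S i + 1)%nat with (S (S (2 * i + 1))) by lia.
  rewrite !cb_pascal.
  set (n := (2 * i + 1)%nat). set (m := (Z.of_nat i - j)%Z).
  try rewrite (cb_arg n (Z.of_nat (S i) - j) (m + 1)) by (unfold m; lia).
  try rewrite (cb_arg n (Z.of_nat (S i) - j - 1) m) by (unfold m; lia).
  try rewrite (cb_arg n (Z.of_nat (S i) - j - 1 - 1) (m - 1)) by (unfold m; lia).
  try rewrite (cb_arg n (Z.of_nat (S i) - j - 1 - 1 - 1) (m - 2)) by (unfold m; lia).
  try rewrite (cb_arg n (m + 1 - 1) m) by lia.
  try rewrite (cb_arg n (Z.of_nat i - (j + 1)) (m - 1)) by (unfold m; lia).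
  try rewrite (cb_arg n (Z.of_nat i - (j + 1) - 1) (m - 2)) by (unfold m; lia).
  try rewrite (cb_arg n (Z.of_nat i - (j - 1)) (m + 1)) by (unfold m; lia).
  try rewrite (cb_arg n (Z.of_nat i - (j - 1) - 1) m) by (unfold m; lia).
  try rewrite (cb_arg n (m - 1 - 1) (m - 2)) by lia.
  fold m. ring.
Qed.

Lemma Wc_m1 i : Wc i (-1) = 0.
Proof.
  unfold Wc, cb.
  destruct (Z.ltb_spec (Z.of_nat i - -1) 0); [lia|].
  destruct (Z.ltb_spec (Z.of_nat i - -1 - 1) 0); [lia|].
  replace (Z.to_nat (Z.of_nat i - -1)) with (S i) by lia.
  replace (Z.to_nat (Z.of_nat i - -1 - 1)) with i by lia.
  rewrite !bn_fact by lia.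
  replace (2 * i + 1 - S i)%nat with i by lia.
  replace (2 * i + 1 - i)%nat with (S i) by lia.
  field. split; apply Rgt_not_eq, INR_fact_pos.
Qed.

Lemma Wc_0j j : Wc 0 (Z.of_nat j) = if Nat.eqb j 0 then 1 else 0.
Proof.
  unfold Wc, cb. destruct j.
  - simpl. ring.
  - destruct (Z.ltb_spec (Z.of_nat 0 - Z.of_nat (S j)) 0); [|lia].
    destruct (Z.ltb_spec (Z.of_nat 0 - Z.of_nat (S j) - 1) 0); [|lia].
    simpl. ring.
Qed.

Lemma Wc_i0 i : Wc i 0 = 2 * INR (fact (2 * i + 1)) / (INR (fact i) * INR (fact (i + 2))).
Proof.
  unfold Wc, cb.
  destruct (Z.ltb_spec (Z.of_nat i - 0) 0); [lia|].
  replace (Z.to_nat (Z.of_nat i - 0)) with i by lia.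
  rewrite bn_fact by lia. replace (2 * i + 1 - i)%nat with (S i) by lia.
  destruct i.
  - simpl. field.
  - destruct (Z.ltb_spec (Z.of_nat (S i) - 0 - 1) 0); [lia|].
    replace (Z.to_nat (Z.of_nat (S i) - 0 - 1)) with i by lia.
    rewrite bn_fact by lia. replace (2 * S i + 1 - i)%nat with (S (S (S i))) by lia.
    replace (S i + 2)%nat with (S (S (S i))) by lia.
    rewrite !(fact_simpl (S (S i))), !(fact_simpl (S i)), !fact_simpl, !mult_INR.
    assert (A1 := INR_fact_pos i). rewrite !S_INR.
    assert (0 <= INR i) by apply pos_INR.
    field. lra.
Qed.

Fixpoint BT (a : R) (f : nat -> R) (k : nat) : R :=
  match k with
  | O => f O
  | S k' => a * BT a f k' + BT a (fun i => f (S i)) k'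
  end.

Lemma BT_ext a k : forall f g, (forall i, f i = g i) -> BT a f k = BT a g k.
Proof.
  induction k as [|k IH]; intros f g E; simpl; [apply E|].
  rewrite (IH f g E). rewrite (IH (fun i => f (S i)) (fun i => g (S i))); auto.
Qed.

Lemma BT_plus a k : forall f g, BT a (fun i => f i + g i) k = BT a f k + BT a g k.
Proof.
  induction k as [|k IH]; intros f g; simpl; [reflexivity|].
  rewrite IH. rewrite (IH (fun i => f (S i)) (fun i => g (S i))). ring.
Qed.

Lemma BT_scal a k : forall l f, BT a (fun i => l * f i) k = l * BT a f k.
Proof.
  induction k as [|k IH]; intros l f; simpl; [reflexivity|].
  rewrite IH. rewrite (IH l (fun i => f (S i))). ring.
Qed.

Lemma BT_S a f k : BT a f (S k) = a * BT a f k + BT a (fun i => f (S i)) k.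
Proof. reflexivity. Qed.

Definition G (a : R) (f : nat -> R) (n : nat) : R :=
  sum_f_R0 (fun i => f i * a ^ (n - i) / (INR (fact i) * INR (fact (n - i)))) n.

Lemma G_rec a f n : INR (S n) * G a f (S n) = a * G a f n + G a (fun i => f (S i)) n.
Proof.
  unfold G.
  set (T := fun i => f i * a ^ (S n - i) / (INR (fact i) * INR (fact (S n - i)))).
  rewrite scal_sum.
  rewrite (sum_eq _ (fun i => INR (S n - i) * T i + INR i * T i)).
  2:{ intros i Hi. rewrite <- Rmult_plus_distr_r, <- plus_INR.
      replace (S n - i + i)%nat with (S n) by lia. unfold T. ring. }
  rewrite plus_sum.
  rewrite tech5. replace (S n - S n)%nat with 0%nat by lia. simpl (INR 0).
  rewrite (decomp_sum (fun i => INR i * T i) (S n)) by lia. simpl pred. simpl (INR 0).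
  rewrite !Rmult_0_l, !Rplus_0_r, Rplus_0_l.
  rewrite scal_sum. f_equal.
  - apply sum_eq. intros i Hi. unfold T.
    replace (S n - i)%nat with (S (n - i)) by lia.
    rewrite fact_simpl, mult_INR. simpl pow.
    assert (A1 := INR_fact_pos i). assert (A2 := INR_fact_pos (n - i)).
    assert (0 < INR (S (n - i))) by (apply lt_0_INR; lia).
    field. lra.
  - apply sum_eq. intros i Hi. unfold T.
    replace (S n - S i)%nat with (n - i)%nat by lia.
    rewrite fact_simpl, mult_INR.
    assert (A1 := INR_fact_pos i). assert (A2 := INR_fact_pos (n - i)).
    assert (0 < INR (S i)) by (apply lt_0_INR; lia).
    field. lra.
Qed.

Lemma BT_G a n : forall f, BT a f n = INR (fact n) * G a f n.
Proof.
  induction n as [|n IH]; intro f.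
  - unfold G. simpl. field.
  - simpl BT. rewrite IH, (IH (fun i => f (S i))).
    rewrite fact_simpl, mult_INR.
    replace (INR (S n) * INR (fact n) * G a f (S n)) with (INR (fact n) * (INR (S n) * G a f (S n))) by ring.
    rewrite G_rec. ring.
Qed.

Section Sub.
Variable w : nat -> R.
Variables q c al : R.
Hypothesis Hodd : forall j, w (2 * j + 1)%nat = 1.
Hypothesis Hev : forall j, w (2 * j + 2)%nat = q.
Hypothesis Hcq : c * c = q.
Hypothesis Hal : al = 1 + q - 2 * c.

Definition Zs k j := Yv w (2 * k + 1) (2 * j + 1).
Definition Sf k j := BT al (fun i => c ^ (i + j) * Wc i (Z.of_nat j)) k.

Lemma Zs_0 j : Zs 0 j = if Nat.eqb j 0 then 1 else 0.
Proof.
  unfold Zs. replace (2 * j + 1)%nat with (S (2 * j)) by lia.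
  destruct j.
  - simpl. assert (H1 := Hodd 0). simpl in H1. rewrite H1. ring.
  - replace (2 * S j)%nat with (S (S (2 * j))) by lia. simpl. ring.
Qed.

Lemma Zs_S0 k : Zs (S k) 0 = Zs k 1 + (1 + q) * Zs k 0.
Proof.
  unfold Zs. replace (2 * S k + 1)%nat with (S (S (2 * k + 1))) by lia.
  simpl (2 * 0 + 1)%nat. simpl (2 * 1 + 1)%nat. simpl Yv at 1.
  assert (H1 := Hodd 0). assert (H2 := Hev 0). simpl in H1, H2.
  rewrite H1, H2. change (Yv w (S (2 * k + 1)) 0) with (Yv w (2 * k + 1) 1). replace (k + (k + 0) + 1)%nat with (2 * k + 1)%nat by lia. ring.
Qed.

Lemma Yv_SS n h : Yv w (S n) (S h) = Yv w n (S (S h)) + w (S h) * Yv w n h.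
Proof. reflexivity. Qed.

Lemma Zs_SS k j : Zs (S k) (S j) = Zs k (S (S j)) + (1 + q) * Zs k (S j) + q * Zs k j.
Proof.
  unfold Zs. set (m := (2 * k + 1)%nat). set (h := (2 * j)%nat).
  replace (2 * S k + 1)%nat with (S (S m)) by (unfold m; lia).
  replace (2 * S j + 1)%nat with (S (S (S h))) by (unfold h; lia).
  replace (2 * S (S j) + 1)%nat with (S (S (S (S (S h))))) by (unfold h; lia).
  replace (2 * j + 1)%nat with (S h) by (unfold h; lia).
  assert (H1 : w (S (S (S h))) = 1) by (rewrite <- (Hodd (S j)); f_equal; unfold h; lia).
  assert (H2 : w (S (S (S (S h)))) = q) by (rewrite <- (Hev (S j)); f_equal; unfold h; lia).
  assert (H3 : w (S (S h)) = q) by (rewrite <- (Hev j); f_equal; unfold h; lia).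
  rewrite !Yv_SS. rewrite H1, H2, H3. replace (h + 1)%nat with (S h) by lia. ring.
Qed.

Lemma Sf_0 j : Sf 0 j = if Nat.eqb j 0 then 1 else 0.
Proof.
  unfold Sf. simpl BT. rewrite Wc_0j. destruct j; simpl; ring.
Qed.

Lemma Sf_S0 k : Sf (S k) 0 = Sf k 1 + (1 + q) * Sf k 0.
Proof.
  unfold Sf. rewrite BT_S.
  rewrite (BT_ext al k (fun i => c ^ (S i + 0) * Wc (S i) (Z.of_nat 0))
                       (fun i => c ^ (i + 1) * Wc i (Z.of_nat 1) +
                                   (2 * c) * (c ^ (i + 0) * Wc i (Z.of_nat 0)))).
  2:{ intro i. rewrite Wc_rec. simpl (Z.of_nat 0). simpl (0 - 1)%Z. rewrite Wc_m1.
      simpl (0 + 1)%Z. replace (S i + 0)%nat with (S (i + 0)) by lia.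
      replace (i + 1)%nat with (S (i + 0)) by lia. simpl pow. simpl (Z.of_nat 1). ring. }
  rewrite BT_plus, BT_scal. rewrite Hal. ring.
Qed.

Lemma Sf_SS k j : Sf (S k) (S j) = Sf k (S (S j)) + (1 + q) * Sf k (S j) + q * Sf k j.
Proof.
  unfold Sf. rewrite BT_S.
  rewrite (BT_ext al k (fun i => c ^ (S i + S j) * Wc (S i) (Z.of_nat (S j))) (fun i => c ^ (i + S (S j)) * Wc i (Z.of_nat (S (S j))) +
                                   ((2 * c) * (c ^ (i + S j) * Wc i (Z.of_nat (S j))) +
                                   q * (c ^ (i + j) * Wc i (Z.of_nat j))))).
  2:{ intro i. rewrite Wc_rec.
      replace (Z.of_nat (S j) + 1)%Z with (Z.of_nat (S (S j))) by lia.
      replace (Z.of_nat (S j) - 1)%Z with (Z.of_nat j) by lia.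
      replace (S i + S j)%nat with (S (S (i + j))) by lia.
      replace (i + S (S j))%nat with (S (S (i + j))) by lia.
      replace (i + S j)%nat with (S (i + j)) by lia.
      simpl pow. rewrite <- Hcq. ring. }
  rewrite !BT_plus, !BT_scal. rewrite Hal. ring.
Qed.

Lemma Zs_Sf k : forall j, Zs k j = Sf k j.
Proof.
  induction k as [|k IH]; intro j.
  - rewrite Zs_0, Sf_0. reflexivity.
  - destruct j.
    + rewrite Zs_S0, Sf_S0, !IH. reflexivity.
    + rewrite Zs_SS, Sf_SS, !IH. reflexivity.
Qed.

Lemma N_formula k : Yv w (2 * S k) 0 = BT al (fun i => c ^ i * Wc i 0) k.
Proof.
  replace (2 * S k)%nat with (S (2 * k + 1)) by lia.
  change (Yv w (S (2 * k + 1)) 0) with (Zs k 0). rewrite Zs_Sf. unfold Sf.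
  apply BT_ext. intro i. rewrite Nat.add_0_r. reflexivity.
Qed.

End Sub.

Lemma poch_pos a n : 0 < a -> 0 < pochhammer a n.
Proof.
  intro Ha. induction n as [|n IH]; simpl; [lra|].
  apply Rmult_lt_0_compat; auto. assert (0 <= INR n) by apply pos_INR. lra.
Qed.

Lemma Wc_hyp i : pochhammer (3/2) i / pochhammer 3 i * 4 ^ i = Wc i 0.
Proof.
  rewrite Wc_i0. induction i as [|i IH].
  - simpl. field.
  - simpl pochhammer. simpl pow.
    assert (P1 := poch_pos (3/2) i ltac:(lra)). assert (P2 := poch_pos 3 i ltac:(lra)).
    assert (0 <= INR i) by apply pos_INR.
    replace (pochhammer (3 / 2) i * (3 / 2 + INR i) / (pochhammer 3 i * (3 + INR i)) * (4 * 4 ^ i))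
      with ((pochhammer (3 / 2) i / pochhammer 3 i * 4 ^ i) * (4 * (3/2 + INR i) / (3 + INR i)))
      by (field; lra).
    rewrite IH.
    replace (2 * S i + 1)%nat with (S (S (2 * i + 1))) by lia.
    replace (S i + 2)%nat with (S (i + 2)) by lia.
    rewrite !(fact_simpl (S (2 * i + 1))), !fact_simpl, !mult_INR.
    assert (A1 := INR_fact_pos i). assert (A2 := INR_fact_pos (i + 2)).
    assert (A3 := INR_fact_pos (2 * i + 1)).
    rewrite !S_INR, !plus_INR, !mult_INR. simpl (INR 2). simpl (INR 1).
    field. lra.
Qed.

Lemma exp_series y : is_series (fun n => y ^ n / INR (fact n)) (exp y).
Proof.
  assert (H := is_exp_Reals y). unfold is_pseries in H.
  eapply is_series_ext; [|exact H]. intro n. rewrite pow_n_pow. reflexivity.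
Qed.

Lemma ex_series_le_R (a b : nat -> R) :
  (forall n, Rabs (a n) <= b n) -> ex_series b -> ex_series a.
Proof. intros H Hb. apply (ex_series_le a b); auto. Qed.

Lemma ex_series_scal_R (c : R) (a : nat -> R) : ex_series a -> ex_series (fun n => c * a n).
Proof. intros [l H]. exists (c * l). exact (is_series_scal_l c a l H). Qed.

Lemma Series_zero : Series (fun _ : nat => 0) = 0.
Proof.
  rewrite (Series_ext _ (fun n : nat => 0 * (fun _ : nat => 0) n)) by (intro; ring).
  rewrite Series_scal_l. ring.
Qed.

Lemma radius_inf (a : nat -> R) :
  (forall r, 0 <= r -> ex_series (fun n => Rabs (a n * r ^ n))) ->
  forall x, Rbar_lt (Rabs x) (CV_radius a).
Proof.
  intros H x. set (r := Rabs x + 1).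
  assert (Hr : 0 <= r) by (unfold r; assert (0 <= Rabs x) by apply Rabs_pos; lra).
  assert (Hb : exists M, forall n, Rabs (a n * r ^ n) <= M).
  { assert (L := ex_series_lim_0 _ (H r Hr)).
    destruct (filterlim_bounded (fun n => Rabs (a n * r ^ n))) as [M HM].
    { exists 0. exact L. }
    exists M. intro n. specialize (HM n). 
    eapply Rle_trans; [|exact HM]. right. unfold norm; simpl. unfold abs; simpl.
    rewrite Rabs_Rabsolu. reflexivity. }
  assert (Hle := proj1 (CV_radius_bounded a) r Hb).
  destruct (CV_radius a) as [v| |]; simpl in *; auto.
  unfold r in Hle. lra.
Qed.

Section BS.
Variable Nq : nat -> R.
Variable R0 : R.
Hypothesis HR0 : 0 < R0.
Hypothesis HNpos : forall m, 0 <= Nq m.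
Hypothesis HNb : forall m, Nq m <= R0 ^ m.

Definition bcoef k n := Nq (n + k) / INR (fact n).
Definition bk k s := PSeries (bcoef k) s.

Lemma bcoef_abs k r n : 0 <= r ->
  Rabs (bcoef k n * r ^ n) <= R0 ^ k * ((R0 * r) ^ n / INR (fact n)).
Proof.
  intro Hr. unfold bcoef. assert (A := INR_fact_pos n).
  rewrite Rabs_pos_eq.
  2:{ apply Rmult_le_pos; [|apply pow_le; lra]. apply Rmult_le_pos; [apply HNpos|].
      left; apply Rinv_0_lt_compat; lra. }
  rewrite Rpow_mult_distr.
  replace (R0 ^ k * (R0 ^ n * r ^ n / INR (fact n))) with (R0 ^ (n + k) * r ^ n / INR (fact n))
    by (rewrite pow_add; field; lra).
  unfold Rdiv. rewrite !Rmult_assoc, (Rmult_comm (/ _)), <- !Rmult_assoc.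
  apply Rmult_le_compat_r; [left; apply Rinv_0_lt_compat; lra|].
  apply Rmult_le_compat_r; [apply pow_le; lra|]. apply HNb.
Qed.

Lemma bk_radius k x : Rbar_lt (Rabs x) (CV_radius (bcoef k)).
Proof.
  apply radius_inf. intros r Hr.
  apply (ex_series_le_R _ (fun n => R0 ^ k * ((R0 * r) ^ n / INR (fact n)))).
  - intro n. rewrite Rabs_Rabsolu. apply bcoef_abs, Hr.
  - apply ex_series_scal_R. eexists; apply exp_series.
Qed.

Lemma bk_deriv k s : is_derive (bk k) s (bk (S k) s).
Proof.
  unfold bk. eapply isd_eq; [|apply is_derive_PSeries, bk_radius].
  apply PSeries_ext. intro n. unfold PS_derive, bcoef.
  replace (S n + k)%nat with (n + S k)%nat by lia.
  rewrite fact_simpl, mult_INR. assert (A := INR_fact_pos n).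
  assert (0 < INR (S n)) by (apply lt_0_INR; lia). field. lra.
Qed.

Lemma bk_0 k : bk k 0 = Nq k.
Proof. unfold bk. rewrite PSeries_0. unfold bcoef. simpl. field. Qed.

Lemma bk_cont k s : continuous (bk k) s.
Proof. apply (ex_derive_continuous (bk k)). exists (bk (S k) s). apply bk_deriv. Qed.

Lemma bk_bound k s : 0 <= s -> 0 <= bk k s <= R0 ^ k * exp (R0 * s).
Proof.
  intro Hs. unfold bk, PSeries.
  assert (Hex : ex_series (fun n => R0 ^ k * ((R0 * s) ^ n / INR (fact n)))).
  { apply ex_series_scal_R. eexists; apply exp_series. }
  assert (Hnn : forall n, 0 <= bcoef k n * s ^ n).
  { intro n. unfold bcoef. apply Rmult_le_pos; [|apply pow_le; lra].
    apply Rmult_le_pos; [apply HNpos|]. left; apply Rinv_0_lt_compat, INR_fact_pos. }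
  split.
  - rewrite <- Series_zero. 
    apply Series_le; [intro n; split; [lra|apply Hnn]|].
    eapply ex_series_le_R; [|exact Hex]. intro n. apply bcoef_abs, Hs.
  - eapply Rle_trans. apply (Series_le _ (fun n => R0 ^ k * ((R0 * s) ^ n / INR (fact n)))).
    + intro n. split; [apply Hnn|]. eapply Rle_trans; [apply Rle_abs|]. apply bcoef_abs, Hs.
    + exact Hex.
    + rewrite Series_scal_l. rewrite (is_series_unique _ _ (exp_series _)). lra.
Qed.

Lemma bk0_ge1 s : 0 <= s -> Nq 0 = 1 -> 1 <= bk 0 s.
Proof.
  intros Hs H1. unfold bk, PSeries.
  assert (Hnn : forall n, 0 <= bcoef 0 n * s ^ n).
  { intro n. unfold bcoef. apply Rmult_le_pos; [|apply pow_le; lra].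
    apply Rmult_le_pos; [apply HNpos|]. left; apply Rinv_0_lt_compat, INR_fact_pos. }
  assert (Hex : ex_series (fun n => bcoef 0 n * s ^ n)).
  { eapply ex_series_le_R; [|apply ex_series_scal_R; eexists; apply (exp_series (R0 * s))].
    intro n. apply bcoef_abs, Hs. }
  rewrite Series_incr_1 by exact Hex.
  assert (E0 : bcoef 0 0 * s ^ 0 = 1) by (unfold bcoef; simpl; rewrite H1; field).
  rewrite E0.
  assert (0 <= Series (fun k => bcoef 0 (S k) * s ^ S k)).
  { rewrite <- Series_zero. apply Series_le.
    intro n; split; [lra|apply Hnn].
    apply ex_series_incr_1 in Hex. exact Hex. }
  lra.
Qed.

End BS.

Lemma poch_ratio n : 0 <= pochhammer (3/2) n / pochhammer 3 n <= 1.
Proof.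
  assert (P1 := poch_pos (3/2) n ltac:(lra)). assert (P2 := poch_pos 3 n ltac:(lra)).
  split. left; apply Rdiv_lt_0_compat; auto.
  induction n as [|n IH]; simpl; [lra|].
  assert (P3 := poch_pos (3/2) n ltac:(lra)). assert (P4 := poch_pos 3 n ltac:(lra)).
  assert (0 <= INR n) by apply pos_INR.
  replace (pochhammer (3 / 2) n * (3 / 2 + INR n) / (pochhammer 3 n * (3 + INR n)))
    with ((pochhammer (3 / 2) n / pochhammer 3 n) * ((3/2 + INR n) / (3 + INR n))) by (field; lra).
  assert (IH' := IH P3 P4).
  assert (0 <= (3/2 + INR n) / (3 + INR n) <= 1).
  { split. apply Rdiv_le_0_compat; lra.
    apply (Rmult_le_reg_r (3 + INR n)); [lra|]. unfold Rdiv. rewrite Rmult_assoc, Rinv_l by lra. lra. }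
  assert (0 <= pochhammer (3 / 2) n / pochhammer 3 n) by (left; apply Rdiv_lt_0_compat; auto).
  nra.
Qed.

Lemma abs_exp_term y n : Rabs (y ^ n / INR (fact n)) = Rabs y ^ n / INR (fact n).
Proof.
  unfold Rdiv. rewrite Rabs_mult, RPow_abs, Rabs_inv, (Rabs_pos_eq (INR _)); auto.
  left; apply INR_fact_pos.
Qed.

Lemma hyp_eq (c al x : R) (Nq : nat -> R) :
  (forall n, Nq (S n) = BT al (fun i => pochhammer (3/2) i / pochhammer 3 i * (4 * c) ^ i) n) ->
  hyp1F1 (3/2) 3 (4 * c * x) * exp (al * x) = bk Nq 1 x.
Proof.
  intro HN.
  set (A := fun n => pochhammer (3/2) n / pochhammer 3 n * (4 * c * x) ^ n / INR (fact n)).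
  set (B := fun n => (al * x) ^ n / INR (fact n)).
  assert (HAa : ex_series (fun n => Rabs (A n))).
  { apply (ex_series_le_R _ (fun n => Rabs (4 * c * x) ^ n / INR (fact n))).
    - intro n. rewrite Rabs_Rabsolu. unfold A.
      unfold Rdiv. rewrite Rmult_assoc. fold (Rdiv ((4 * c * x) ^ n) (INR (fact n))).
      rewrite Rabs_mult, abs_exp_term. destruct (poch_ratio n) as [P1 P2].
      rewrite Rabs_pos_eq by exact P1.
      assert (0 <= Rabs (4 * c * x) ^ n / INR (fact n)).
      { apply Rdiv_le_0_compat; [apply pow_le, Rabs_pos|apply INR_fact_pos]. }
      nra.
    - eexists; apply exp_series. }
  assert (HBa : ex_series (fun n => Rabs (B n))).
  { eexists. eapply is_series_ext; [|apply (exp_series (Rabs (al * x)))].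
    intro n. unfold B. rewrite abs_exp_term. reflexivity. }
  assert (HA : is_series A (hyp1F1 (3/2) 3 (4 * c * x))).
  { unfold hyp1F1. apply Series_correct. apply ex_series_Rabs, HAa. }
  assert (HM := is_series_mult A B _ _ HA (exp_series (al * x)) HAa HBa).
  unfold bk, PSeries. symmetry. apply is_series_unique.
  eapply is_series_ext; [|exact HM]. intro n. simpl.
  unfold bcoef. rewrite Nat.add_1_r, HN, BT_G. unfold G.
  assert (E : forall S, INR (fact n) * S / INR (fact n) * x ^ n = x ^ n * S).
  { intro S. assert (F3 := INR_fact_pos n). field. lra. }
  rewrite E, scal_sum.
  apply sum_eq. intros i Hi. unfold A, B.
  rewrite !Rpow_mult_distr.
  replace (x ^ n) with (x ^ i * x ^ (n - i)) by (rewrite <- pow_add; f_equal; lia).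
  assert (F1 := INR_fact_pos i). assert (F2 := INR_fact_pos (n - i)). assert (F3 := INR_fact_pos n).
  assert (P3 := poch_pos 3 i ltac:(lra)). field. lra.
Qed.

Lemma u0_zero (u : Z -> R -> R)
  (Hode : forall (j : Z) (t : R), 0 < t ->
     is_derive (u j) t (u j t * (u (j + 1)%Z t - u (j - 1)%Z t)))
  (Hcont : forall j : Z, filterlim (u j) (at_right 0) (locally (u j 0)))
  (Hbnd : forall T : R, 0 < T -> exists M : R,
     forall (j : Z) (t : R), 0 <= t <= T -> Rabs (u j t) <= M)
  (Hneg : forall j : Z, (j <= 0)%Z -> u j 0 = 0) :
  forall t, 0 <= t -> u 0%Z t = 0.
Proof.
  intros t Ht. destruct (Req_dec t 0) as [->|ne]; [apply Hneg; lia|].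
  destruct (Hbnd t ltac:(lra)) as [M HM].
  assert (HM0 : 0 <= M) by (eapply Rle_trans; [apply Rabs_pos|apply (HM 0%Z 0); lra]).
  refine (GL (fun _ s => u 0%Z s) (fun _ s => u 0%Z s * (u (0 + 1)%Z s - u (0 - 1)%Z s))
            t M 1 (2 * M) HM0 ltac:(lra) ltac:(lra) _ _ _ _ _ O t _); [| | | | |lra].
  - intro. apply Hneg; lia.
  - intro. rewrite <- (Hneg 0%Z) at 2 by lia. apply Hcont.
  - intros k s Hs. apply Hode, Hs.
  - intros k s Hs. rewrite pow1, Rmult_1_r. apply HM, Hs.
  - intros s E Hs HE Hj k. specialize (Hj O). rewrite pow_O, Rmult_1_r in Hj.
    rewrite pow1, Rmult_1_r, Rabs_mult.
    assert (B : Rabs (u (0 + 1)%Z s - u (0 - 1)%Z s) <= 2 * M).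
    { eapply Rle_trans. apply Rabs_triang. rewrite Rabs_Ropp.
      assert (Rabs (u (0 + 1)%Z s) <= M) by (apply HM; lra).
      assert (Rabs (u (0 - 1)%Z s) <= M) by (apply HM; lra). lra. }
    replace (2 * M * E) with (E * (2 * M)) by ring.
    apply Rmult_le_compat; auto using Rabs_pos.
Qed.

Theorem proposition11 (q : R) (hq : 0 < q) (u : Z -> R -> R)
  (Hode : forall (j : Z) (t : R), 0 < t ->
     is_derive (u j) t (u j t * (u (j + 1)%Z t - u (j - 1)%Z t)))
  (Hcont : forall j : Z, filterlim (u j) (at_right 0) (locally (u j 0)))
  (Hbnd : forall T : R, 0 < T -> exists M : R,
     forall (j : Z) (t : R), 0 <= t <= T -> Rabs (u j t) <= M)
  (Hneg : forall j : Z, (j <= 0)%Z -> u j 0 = 0)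
  (Hodd : forall j : Z, (0 < j)%Z -> Z.odd j = true -> u j 0 = 1)
  (Hevn : forall j : Z, (0 < j)%Z -> Z.even j = true -> u j 0 = q) :
  forall t : R, 0 <= t -> u 1%Z t = Derive (f1 q) t / f1 q t.
Proof.
  intros t Ht.
  set (w := fun (h : nat) (s : R) => u (Z.of_nat h) s).
  assert (Hw0 : forall s, 0 < s -> w O s = 0).
  { intros s Hs. apply (u0_zero u Hode Hcont Hbnd Hneg). lra. }
  assert (Hwd : forall h s, 0 < s ->
    is_derive (w (S h)) s (w (S h) s * (w (S (S h)) s - w h s))).
  { intros h s Hs. unfold w.
    assert (H := Hode (Z.of_nat (S h)) s Hs).
    replace (Z.of_nat (S h) + 1)%Z with (Z.of_nat (S (S h))) in H by lia.
    replace (Z.of_nat (S h) - 1)%Z with (Z.of_nat h) in H by lia.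
    exact H. }
  assert (Hwrc : forall h, filterlim (w h) (at_right 0) (locally (w h 0))).
  { intro h. apply Hcont. }
  set (w0 := fun h => w h 0).
  assert (Hodd' : forall j, w0 (2 * j + 1)%nat = 1).
  { intro j. unfold w0, w. apply Hodd. lia.
    replace (Z.of_nat (2 * j + 1)) with (2 * Z.of_nat j + 1)%Z by lia. apply Z.odd_odd. }
  assert (Hev' : forall j, w0 (2 * j + 2)%nat = q).
  { intro j. unfold w0, w. apply Hevn. lia.
    replace (Z.of_nat (2 * j + 2)) with (2 * (Z.of_nat j + 1))%Z by lia. apply Z.even_even. }
  assert (Hw0v : forall h, 0 <= w0 h <= 1 + q).
  { intro h. destruct (Nat.Even_or_Odd h) as [[m ->]|[m ->]].
    - destruct m as [|m].
      + unfold w0, w. simpl. rewrite Hneg by lia. lra.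
      + replace (2 * S m)%nat with (2 * m + 2)%nat by lia. rewrite Hev'. lra.
    - rewrite Hodd'. lra. }
  set (Nq := fun k => cm w k 0).
  set (R0 := (2 + q) ^ 2).
  assert (HNpos : forall m, 0 <= Nq m).
  { intro m. unfold Nq, cm, Yt. apply Yv_pos. intro h. apply (Hw0v h). }
  assert (HNb : forall m, Nq m <= R0 ^ m).
  { intro m. unfold Nq, cm, Yt, R0. rewrite <- pow_mult.
    eapply Rle_trans. apply Rle_abs.
    replace (2 + q) with (1 + (1 + q)) by ring.
    apply Yv_bound. lra. intro h. rewrite Rabs_pos_eq by apply (Hw0v h). apply (Hw0v h). }
  assert (HN0 : Nq O = 1) by reflexivity.
  set (c := sqrt q). set (al := (c - 1) ^ 2).
  assert (Hcq : c * c = q) by (apply sqrt_sqrt; lra).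
  assert (Hal : al = 1 + q - 2 * c) by (unfold al; rewrite <- Hcq; ring).
  assert (HNS : forall n, Nq (S n) =
     BT al (fun i => pochhammer (3/2) i / pochhammer 3 i * (4 * c) ^ i) n).
  { intro n. unfold Nq, cm, Yt. change (fun j : nat => w j 0) with w0. rewrite (N_formula w0 q c al Hodd' Hev' Hcq Hal n).
    apply BT_ext. intro i. rewrite Rpow_mult_distr, <- Wc_hyp. ring. }
  assert (Key : forall s, 0 <= s -> bk Nq 0 s * w 1%nat s = bk Nq 1 s).
  { intros s Hs. set (T := s + 1).
    destruct (Hbnd T ltac:(unfold T; lra)) as [M HM].
    assert (HM0 : 0 <= M) by (eapply Rle_trans; [apply Rabs_pos|apply (HM 0%Z 0); unfold T; lra]).
    set (rho := Rmax R0 ((1 + M) ^ 2)).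
    assert (HR0 : 0 < R0) by (unfold R0; apply pow_lt; lra).
    assert (Hrho1 : R0 <= rho) by apply Rmax_l.
    assert (Hrho2 : (1 + M) ^ 2 <= rho) by apply Rmax_r.
    set (g := fun k x => bk Nq 0 x * cm w k x - bk Nq k x).
    set (g' := fun k x => g (S k) x - g 1%nat x * cm w k x).
    assert (Hcmb : forall k x, 0 <= x <= T -> Rabs (cm w k x) <= rho ^ k).
    { intros k x Hx. unfold cm, Yt. eapply Rle_trans. apply Yv_bound. exact HM0.
      intro h. apply HM, Hx. rewrite pow_mult. apply pow_incr. split; [|exact Hrho2].
      apply pow_le; lra. }
    assert (G := GL g g' T (2 * exp (R0 * T)) rho (2 * rho)).
    assert (E : g 1%nat s = 0).
    { apply G; [left; apply Rmult_lt_0_compat; [lra|apply exp_pos]|lra|lra| | | | | |unfold T; lra].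
      - intro k. unfold g. rewrite !bk_0, HN0. unfold Nq. ring.
      - intro k. unfold g.
        assert (L := rc_plus _ _ _ _
                 (rc_mult _ _ _ _ (rc_cont _ (bk_cont Nq R0 HNpos HNb 0 0))
                                  (Yv_rc w Hwrc (2 * k) 0))
                 (rc_mult _ _ _ _ (rc_const (-1)) (rc_cont _ (bk_cont Nq R0 HNpos HNb k 0)))).
        rewrite !bk_0, HN0 in L.
        replace (1 * Yv (fun j : nat => w j 0) (2 * k) 0 + -1 * Nq k) with 0 in L
          by (unfold Nq, cm, Yt; ring).
        eapply rc_ext; [|exact L]. intros x _. unfold cm, Yt. ring.
      - intros k x Hx. unfold g', g.
        eapply isd_eq; [|apply (is_derive_minus (fun x => bk Nq 0 x * cm w k x) (bk Nq k));
           [apply isd_mult; [apply (bk_deriv Nq R0 HNpos HNb)|apply cm_deriv; auto]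
           |apply (bk_deriv Nq R0 HNpos HNb)]].
        rewrite cm_1. unfold minus, plus, opp; simpl. ring.
      - intros k x Hx. unfold g.
        destruct (bk_bound Nq R0 HNpos HNb 0 x (proj1 Hx)) as [B1 B2].
        destruct (bk_bound Nq R0 HNpos HNb k x (proj1 Hx)) as [B3 B4].
        assert (Ee : exp (R0 * x) <= exp (R0 * T)).
        { destruct (Req_dec x T) as [->|ne]; [lra|]. left. apply exp_increasing.
          apply Rmult_lt_compat_l; [exact HR0|]. lra. }
        assert (Hr : R0 ^ k <= rho ^ k) by (apply pow_incr; lra).
        assert (Hc := Hcmb k x Hx).
        assert (0 <= rho ^ k) by (apply pow_le; lra).
        eapply Rle_trans. apply Rabs_triang. rewrite Rabs_Ropp, Rabs_mult.
        rewrite (Rabs_pos_eq (bk Nq 0 x)) by exact B1.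
        rewrite (Rabs_pos_eq (bk Nq k x)) by exact B3.
        simpl in B2. rewrite Rmult_1_l in B2.
        assert (bk Nq 0 x * Rabs (cm w k x) <= exp (R0 * T) * rho ^ k).
        { apply Rmult_le_compat; auto using Rabs_pos; lra. }
        assert (bk Nq k x <= rho ^ k * exp (R0 * T)).
        { eapply Rle_trans; [exact B4|].
          assert (0 <= R0 ^ k) by (apply pow_le; lra). assert (0 < exp (R0 * x)) by apply exp_pos.
          apply Rmult_le_compat; lra. }
        nra.
      - intros x Ee Hx HE Hj k. unfold g'.
        assert (J1 := Hj (S k)). assert (J2 := Hj 1%nat).
        assert (Hc := Hcmb k x ltac:(lra)).
        assert (0 <= rho ^ k) by (apply pow_le; lra).
        eapply Rle_trans. apply Rabs_triang. rewrite Rabs_Ropp, Rabs_mult.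
        assert (Rabs (g 1%nat x) * Rabs (cm w k x) <= (Ee * rho ^ 1) * rho ^ k).
        { apply Rmult_le_compat; auto using Rabs_pos. }
        simpl pow in *. nra. }
    unfold g in E. rewrite cm_1 in E. lra. }
  assert (Hdb : forall x, Derive (bk Nq 0) x = bk Nq 1 x).
  { intro x. apply is_derive_unique, (bk_deriv Nq R0 HNpos HNb). }
  assert (Hf : forall x, f1 q x = bk Nq 0 x).
  { intro x. unfold f1. cbv zeta. fold c.
    rewrite (RInt_ext _ (Derive (bk Nq 0))).
    2:{ intros y _. rewrite Hdb. apply (hyp_eq c al y Nq HNS). }
    rewrite RInt_Derive.
    - rewrite bk_0, HN0. ring.
    - intros y _. exists (bk Nq 1 y). apply (bk_deriv Nq R0 HNpos HNb).
    - intros y _. apply (continuous_ext (bk Nq 1)). intro z; symmetry; apply Hdb.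
      apply (bk_cont Nq R0 HNpos HNb). }
  rewrite (Derive_ext _ _ _ Hf), Hdb, Hf.
  assert (B := bk0_ge1 Nq R0 HNpos HNb t Ht HN0).
  rewrite <- (Key t Ht). unfold w. simpl (Z.of_nat 1). field. lra.
Qed.
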